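(* Let $n$ be a positive integer and let $p>n+1$ be a prime. Define the polynomial $$F_n(x)=\sum_{0<i_1<\cdots<i_n<p}\frac{x^{i_1}}{i_1\cdots i_n}\in\mathbb{Z}_p[x],$$ where the sum ranges over integers $i_1,\dots,i_n$. Then $$F_n(1-x)\equiv(-1)^{n-1}F_n(x)\pmod p,$$ i.e., every coefficient of the polynomial $F_n(1-x)-(-1)^{n-1}F_n(x)$ is divisible by $p$ in $\mathbb{Z}_p$.
   Context: $\mathbb{Z}_p$ denotes the ring of $p$-adic integers (the integral ring of the $p$-adic field $\mathbb{Q}_p$); the coefficients $1/(i_1\cdots i_n)$ lie in $\mathbb{Z}_p$ since each $i_j<p$. *)

(* Defs.v *)
From mathcomp Require Import all_boot all_order all_algebra.
Set Implicit Arguments. Unset Strict Implicit. Unset Printing Implicit Defensive.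
Import Order.TTheory GRing.Theory Num.Theory.
Local Open Scope ring_scope.

(* The index tuple (i_1,...,i_n) is
   t : n.-tuple 'I_p with 0 < i_1 < ... < i_n (strictly increasing). *)
Definition Fn (n p : nat) : {poly rat} :=
  \sum_(t : n.-tuple 'I_p | sorted ltn (0%N :: [seq val j | j <- t]))
     ((\prod_(j <- t) ((val j)%:R : rat))^-1 *: 'X^(nth 0%N [seq val j | j <- t] 0)).

(* A rational number lies in Z_p (i.e. in Z_p ∩ Q = Z_(p)) iff p does not
   divide its (reduced) denominator. *)
Definition p_integral (p : nat) (q : rat) : bool := ~~ ((p%:Z) %| denq q)%Z.

Definition p_divisible (p : nat) (c : rat) : Prop :=
  exists d : rat, p_integral p d /\ c = p%:R * d.

(* Main.v *)
Require Import Defs.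
From mathcomp Require Import all_boot all_order all_algebra.
From mathcomp Require Import ring.
Set Implicit Arguments. Unset Strict Implicit. Unset Printing Implicit Defensive.
Import Order.TTheory GRing.Theory Num.Theory.
Local Open Scope ring_scope.
Lemma big_tuple_cons (R : Type) (idx : R) (op : Monoid.com_law idx)
  (T : finType) n (P : pred (n.+1.-tuple T)) (G : n.+1.-tuple T -> R) :
  \big[op/idx]_(t : n.+1.-tuple T | P t) G t =
  \big[op/idx]_(h : T) \big[op/idx]_(t : n.-tuple T | P [tuple of h :: t])
      G [tuple of h :: t].
Proof.
rewrite pair_big_dep /=.
rewrite (reindex (fun u : T * n.-tuple T => [tuple of u.1 :: u.2])) /=.
  by apply: eq_bigl => -[h t].
exists (fun t => (thead t, [tuple of behead t])) => [[h t] _|t _] /=.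
  by congr pair; apply: val_inj.
by rewrite -tuple_eta.
Qed.

Section FieldPart.
Variables (F : fieldType) (p : nat).
Hypothesis pr : prime p.
Hypothesis ch : p \in [pchar F].

Definition w (i : nat) : F := (i%:R)^-1.
Definition E (n m : nat) : F :=
  \sum_(t : n.-tuple 'I_p | sorted ltn (m :: [seq val j | j <- t]))
     \prod_(j <- t) w (val j).

Lemma E0 m : E 0 m = 1.
Proof.
rewrite /E (big_pred1 [tuple]) ?big_nil // => t.
by rewrite tuple0 /= eqxx.
Qed.

Lemma ES n m : E n.+1 m = \sum_(m.+1 <= h < p) w h * E n h.
Proof.
rewrite /E big_tuple_cons big_geq_mkord /= (bigID (fun h : 'I_p => (m < h)%N)) /=.
rewrite [X in _ + X]big1 ?addr0; last first.
  by move=> h /negbTE mh; rewrite big_pred0 // => t /=; rewrite mh.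
apply: eq_big => [h|h mh]; first by [].
rewrite mulr_sumr; apply: eq_big => [t|t _]; first by rewrite /= mh.
by rewrite big_cons.
Qed.

Lemma ESr n m : (m.+1 < p)%N -> E n.+1 m = w m.+1 * E n m.+1 + E n.+1 m.+1.
Proof. by move=> lt; rewrite !ES big_ltn. Qed.

Lemma ESge n m : (p <= m.+1)%N -> E n.+1 m = 0.
Proof. by move=> ge; rewrite ES big_geq. Qed.

Lemma Evan k m : (p <= k.+1 + m)%N -> E k.+1 m = 0.
Proof.
elim: k m => [|k IH] m; first by move=> h; rewrite ESge.
move=> h; rewrite ES big1_seq // => i /andP[_]; rewrite mem_index_iota => /andP[mi _].
rewrite IH ?mulr0 //; apply: leq_trans h _; rewrite !addSn.
by rewrite ltnS ltn_add2l.
Qed.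

Definition Pm m : {poly F} := \prod_(m.+1 <= i < p) (1 + w i *: 'X).

Lemma coefPm d m : (p <= m.+1 + d)%N -> forall k, (Pm m)`_k = E k m.
Proof.
elim: d m => [|d IH] m hm k.
  move: hm; rewrite addn0 => hm.
  rewrite /Pm big_geq //.
  rewrite (coef1 F k); case: k => [|k]; first by rewrite E0.
  by rewrite ESge.
have [ge|lt] := leqP p m.+1.
  rewrite /Pm big_geq // (coef1 F k); case: k => [|k]; first by rewrite E0.
  by rewrite ESge.
rewrite /Pm big_ltn // -/(Pm m.+1) mulrDl mul1r coefD -scalerAl coefZ coefXM.
have hm' : (p <= m.+2 + d)%N by rewrite addSnnS.
case: k => [|k] /=; first by rewrite !IH // !E0 mulr0 addr0.
by rewrite !IH // [RHS]ESr // addrC.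
Qed.

Lemma natF_eq0 i : (i%:R == 0 :> F) = (p %| i)%N.
Proof. by rewrite (dvdn_pcharf ch). Qed.

Lemma natF_neq0 i : (0 < i)%N -> (i < p)%N -> i%:R != 0 :> F.
Proof. by move=> i0 ip; rewrite natF_eq0 gtnNdvd. Qed.

Lemma p_gt1 : (1 < p)%N. Proof. exact: prime_gt1. Qed.

Lemma fermat i : (0 < i)%N -> (i < p)%N -> (i%:R : F) ^+ p.-1 = 1.
Proof.
move=> i0 ip; have := pFrobenius_aut_nat ch i; rewrite pFrobenius_autE.
rewrite -(prednK (prime_gt0 pr)) exprSr => h.
by apply: (mulIf (natF_neq0 i0 ip)); rewrite mul1r.
Qed.

Lemma Pm0_root i : (i < p)%N -> root (Pm 0 - (1 - 'X^(p.-1))) i%:R.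
Proof.
move=> ip; rewrite rootE !hornerE /Pm horner_prod.
case: i ip => [|i] ip.
  rewrite big1 => [|j _]; last by rewrite hornerD hornerC hornerZ hornerX mulr0 addr0.
  by rewrite mulr0n expr0n eqn0Ngt ltn_predRL p_gt1 /= subr0 subrr.
rewrite fermat // subrr subr0.
have jin : (p - i.+1 \in index_iota 1 p)%N.
  by rewrite mem_index_iota subn_gt0 ip /= ltn_subrL (prime_gt0 pr).
rewrite (bigD1_seq _ jin (iota_uniq _ _)) /= !hornerE /w.
rewrite natrB ?(ltnW ip) // (pcharf0 ch) sub0r invrN mulNr.
by rewrite mulVf ?natF_neq0 // subrr mul0r.
Qed.

Lemma natF_inj i j : (i < p)%N -> (j < p)%N -> (i%:R : F) = j%:R -> i = j.
Proof.
wlog ij : i j / (i <= j)%N.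
  move=> H ip jp e; case/orP: (leq_total i j) => h; first exact: H.
  by apply/esym/H.
move=> ip jp e; case E: (j - i)%N => [|d].
  by apply/eqP; rewrite eqn_leq ij -subn_eq0 E.
have : ((j - i)%:R : F) == 0 by rewrite natrB // e subrr.
rewrite E (negbTE (natF_neq0 _ _)) //; apply: leq_ltn_trans jp; rewrite -E leq_subr //.
Qed.

Lemma coefPm0 k : (Pm 0)`_k = E k 0.
Proof. by apply: (@coefPm p); rewrite add1n. Qed.

Lemma EK k : (0 < k)%N -> (k < p.-1)%N -> E k 0 = 0.
Proof.
move=> k0 kp.
have Q0 : Pm 0 - (1 - 'X^(p.-1)) = 0.
  apply: (@roots_geq_poly_eq0 _ _ [seq (i%:R : F) | i <- iota 0 p]).
  - by apply/allP => x /mapP [i]; rewrite mem_iota add0n => /andP[_ ip] ->; apply: Pm0_root.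
  - rewrite map_inj_in_uniq ?iota_uniq // => i j; rewrite !mem_iota !add0n.
    by move=> /andP[_ ip] /andP[_ jp]; apply: natF_inj.
  rewrite size_map size_iota (leq_trans (size_add _ _)) // geq_max size_opp.
  apply/andP; split.
    apply/leq_sizeP => j jp; rewrite coefPm0.
    case: j jp => [|j] jp; first by move: (prime_gt0 pr); rewrite ltnNge jp.
    by rewrite Evan ?addn0.
  rewrite (leq_trans (size_add _ _)) // geq_max size_opp size_polyXn size_poly1.
  by rewrite (prime_gt0 pr) /= ltn_predL (prime_gt0 pr).
have := congr1 (fun q : {poly F} => q`_k) Q0; rewrite coefB coefB coef1 coefXn coef0 coefPm0.
by rewrite (gtn_eqF k0) (ltn_eqF kp) subrr subr0.
Qed.

Definition Fpol n : {poly F} := \sum_(1 <= m < p) (E n m.-1 - E n m) *: 'X^m.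
Definition Bpol k : {poly F} := \sum_(1 <= m < p) E k m *: 'X^m.

Lemma Fpol0 : Fpol 0 = 0.
Proof. by rewrite /Fpol big1 // => m _; rewrite !E0 subrr scale0r. Qed.

Lemma XdF n : 'X * (Fpol n.+1)^`() = Bpol n.
Proof.
rewrite /Fpol /Bpol raddf_sum mulr_sumr big_nat_cond [RHS]big_nat_cond.
apply: eq_bigr => m /andP[/andP[m1 mp] _].
rewrite /= derivZ derivXn -scalerAr mulrnAr -exprS prednK // -scaler_nat scalerA.
congr (_ *: _); rewrite ESr ?prednK // addrK /w.
by rewrite mulrAC mulVf ?mul1r // natF_neq0.
Qed.

Lemma XmB k : ('X - 1) * Bpol k = E k p.-1 *: 'X^p - E k 0 *: 'X + Fpol k.
Proof.
pose g (m : nat) : {poly F} := E k m *: 'X^(m.+1).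
have L : ('X - 1) * Bpol k = \sum_(0 <= m < p) g m - E k 0 *: 'X - \sum_(1 <= m < p) E k m *: 'X^m.
  rewrite mulrBl mul1r mulr_sumr (big_ltn (prime_gt0 pr)) /g expr1.
  rewrite (addrC (E k 0 *: 'X)) addrK /Bpol; congr (_ - _).
  by apply: eq_bigr => m _; rewrite -scalerAr -exprS.
have R : Fpol k = \sum_(0 <= m < p.-1) g m - \sum_(1 <= m < p) E k m *: 'X^m.
  rewrite /Fpol; under eq_bigr do rewrite scalerBl.
  by rewrite sumrB big_add1.
rewrite L R.
have -> : \sum_(0 <= m < p) g m = \sum_(0 <= m < p.-1) g m + E k p.-1 *: 'X^p.
  by rewrite -{1}(prednK (prime_gt0 pr)) big_nat_recr //= /g prednK // prime_gt0.
ring.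
Qed.

Definition A n : {poly F} := Fpol n \Po (1 - 'X) + (-1) ^+ n *: Fpol n.

Lemma WdF n : 'X * ('X - 1) * (Fpol n.+1)^`() = E n p.-1 *: 'X^p - E n 0 *: 'X + Fpol n.
Proof. by rewrite [_ * ('X - 1)]mulrC -mulrA XdF XmB. Qed.

Lemma Wcomp : ('X * ('X - 1)) \Po (1 - 'X) = 'X * ('X - 1) :> {poly F}.
Proof. rewrite comp_polyM comp_polyB comp_polyX -polyC1 comp_polyC polyC1; ring. Qed.

Lemma W_neq0 : 'X * ('X - 1) != 0 :> {poly F}.
Proof.
rewrite mulf_neq0 ?polyX_eq0 // -polyC1 -size_poly_eq0 size_XsubC //.
Qed.

Lemma frobX : (1 - 'X) ^+ p = 1 - 'X ^+ p :> {poly F}.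
Proof.
have chP : p \in [pchar {poly F}] by rewrite pchar_poly.
have := pFrobenius_autB_comm chP (esym (commr1 'X)).
by rewrite !pFrobenius_autE expr1n.
Qed.

Lemma Fpol_coef0 n : (Fpol n)`_0 = 0.
Proof.
rewrite /Fpol coef_sum big1_seq // => m /andP[_]; rewrite mem_index_iota => /andP[m1 _].
by rewrite coefZ coefXn eq_sym gtn_eqF // mulr0.
Qed.

Lemma Fpol_size n : (size (Fpol n) <= p)%N.
Proof.
apply/leq_sizeP => j jp; rewrite /Fpol coef_sum big1_seq // => m /andP[_].
rewrite mem_index_iota => /andP[_ mp].
by rewrite coefZ coefXn (gtn_eqF (leq_trans mp jp)) mulr0.
Qed.

Lemma Fpol_at1 n : (Fpol n).[1] = E n 0 - E n p.-1.
Proof.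
rewrite /Fpol horner_sum.
under eq_bigr do rewrite hornerZ hornerXn expr1n mulr1.
rewrite big_add1 /= -opprB -telescope_sumr ?leq0n // -sumrN.
by apply: eq_bigr => m _; rewrite opprB.
Qed.

Lemma deriv0_small (P : {poly F}) :
  (size P <= p)%N -> P^`() = 0 -> P`_0 = 0 -> P = 0.
Proof.
move=> sP dP c0; apply/polyP => i; rewrite coef0.
case: i => [//|j]; have [jp|pj] := ltnP j.+1 p; last exact: (leq_sizeP _ _ sP).
have := congr1 (fun q : {poly F} => q`_j) dP; rewrite coef_deriv coef0 -mulr_natr.
by move/eqP; rewrite mulf_eq0 (negbTE (natF_neq0 _ _)) // orbF => /eqP.
Qed.

Lemma A_size n : (size (A n) <= p)%N.
Proof.
rewrite /A (leq_trans (size_add _ _)) // geq_max (leq_trans (size_scale_leq _ _)) ?Fpol_size // andbT.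
rewrite (leq_trans (size_comp_poly_leq _ _)) //.
have -> : size (1 - 'X : {poly F}) = 2.
  by rewrite -opprB size_opp -polyC1 size_XsubC.
rewrite muln1; have := Fpol_size n; case: (size (Fpol n)) => [|s] //= _.
exact: prime_gt0.
Qed.

Lemma Azero n : (0 < n)%N -> (n < p.-1)%N -> A n = 0.
Proof.
elim: n => [//|n IH] _ np.
have dA : (A n.+1)^`() = 0.
  apply: (mulfI W_neq0); rewrite mulr0.
  rewrite /A derivD derivZ deriv_comp derivB derivX -polyC1 derivC sub0r mulrN1.
  rewrite mulrDr mulrN -{1}Wcomp -comp_polyM -scalerAr WdF.
  case: n IH np => [|n] IH np.
    rewrite Fpol0 !E0 addr0 !scale1r comp_polyB comp_polyX comp_Xn_poly frobX expr1.
    by rewrite -scaleN1r; ring.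
  have e1 : E n.+1 0 = 0 := @EK n.+1 isT (ltn_trans (ltnSn _) np).
  rewrite ESge ?prednK ?prime_gt0 // e1 !scale0r subrr add0r.
  have h := IH isT (ltn_trans (ltnSn _) np); rewrite /A in h.
  have -> : Fpol n.+1 \Po (1 - 'X) = - ((-1) ^+ n.+1 *: Fpol n.+1).
    by apply/eqP; rewrite -addr_eq0 h.
  by rewrite opprK !exprS !mulN1r opprK scaleNr addNr.
apply: deriv0_small => //; first exact: A_size.
rewrite -horner_coef0 /A hornerD hornerZ horner_comp !hornerE horner_coef0 Fpol_coef0 mulr0 addr0.
rewrite subr0 Fpol_at1 EK // ESge ?subrr // prednK // prime_gt0 //.
Qed.

Definition FF n : {poly F} :=
  \sum_(t : n.-tuple 'I_p | sorted ltn (0%N :: [seq val j | j <- t]))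
     ((\prod_(j <- t) ((val j)%:R : F))^-1 *: 'X^(nth 0%N [seq val j | j <- t] 0)).

Lemma FF_Fpol n : FF n.+1 = Fpol n.+1.
Proof.
rewrite /FF big_tuple_cons /Fpol big_geq_mkord /= (bigID (fun h : 'I_p => (0 < h)%N)) /=.
rewrite [X in _ + X]big1 ?addr0; last first.
  by move=> h /negbTE mh; rewrite big_pred0 // => t /=; rewrite mh.
apply: eq_big => [h|h mh]; first by [].
rewrite ESr ?prednK // addrK /E -scaler_suml mulr_sumr; congr (_ *: _).
apply: eq_big => [t|t _]; first by rewrite /= mh.
by rewrite big_cons invfM prodfV mulrC.
Qed.

Lemma main_F n : (0 < n)%N -> (n.+1 < p)%N ->
  FF n \Po (1 - 'X) - (-1) ^+ n.-1 *: FF n = 0.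
Proof.
case: n => [//|n] _ np; rewrite FF_Fpol -(@Azero n.+1 isT) ?ltn_predRL // /A.
by rewrite [in RHS]exprS mulN1r scaleNr.
Qed.

End FieldPart.

Lemma intrn (R : pzRingType) (n : nat) : (n%:Z)%:~R = n%:R :> R.
Proof. by rewrite -pmulrn. Qed.

Section Transfer.
Variable p : nat.
Hypothesis pr : prime p.

Definition rep (q : rat) (z : 'F_p) := exists (a : int) (d : nat),
  [/\ ~~ (p %| d)%N, q * d%:R = a%:~R & z * d%:R = a%:~R].

Lemma Fp_nat_neq0 d : ~~ (p %| d)%N -> (d%:R : 'F_p) != 0.
Proof. by rewrite (dvdn_pcharf (pchar_Fp pr)). Qed.

Lemma rat_nat_neq0 d : ~~ (p %| d)%N -> (d%:R : rat) != 0.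
Proof. by apply: contra; rewrite pnatr_eq0 => /eqP ->; rewrite dvdn0. Qed.

Lemma rep0 : rep 0 0.
Proof. by exists 0, 1%N; rewrite !mul0r Euclid_dvd1. Qed.

Lemma repD q1 z1 q2 z2 : rep q1 z1 -> rep q2 z2 -> rep (q1 + q2) (z1 + z2).
Proof.
move=> [a1 [d1 [n1 h1 g1]]] [a2 [d2 [n2 h2 g2]]].
exists (a1 * d2%:Z + a2 * d1%:Z), (d1 * d2)%N; split.
- by rewrite Euclid_dvdM // negb_or n1 n2.
- by rewrite natrM intrD !intrM !intrn -h1 -h2; ring.
- by rewrite natrM intrD !intrM !intrn -g1 -g2; ring.
Qed.

Lemma repM q1 z1 q2 z2 : rep q1 z1 -> rep q2 z2 -> rep (q1 * q2) (z1 * z2).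
Proof.
move=> [a1 [d1 [n1 h1 g1]]] [a2 [d2 [n2 h2 g2]]].
exists (a1 * a2), (d1 * d2)%N; split.
- by rewrite Euclid_dvdM // negb_or n1 n2.
- by rewrite natrM intrM -h1 -h2; ring.
- by rewrite natrM intrM -g1 -g2; ring.
Qed.

Lemma repN q z : rep q z -> rep (- q) (- z).
Proof.
move=> [a [d [n h g]]]; exists (- a), d; split => //.
- by rewrite mulNr h intrN.
- by rewrite mulNr g intrN.
Qed.

Lemma rep_nat N : rep N%:R N%:R.
Proof.
exists N%:Z, 1%N; rewrite !mulr1 !intrn; split => //.
by rewrite Euclid_dvd1.
Qed.

Lemma rep_natinv N : ~~ (p %| N)%N -> rep (N%:R)^-1 (N%:R)^-1.
Proof.
move=> nN; exists 1, N; split => //.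
- by rewrite mulVf // rat_nat_neq0.
- by rewrite mulVf // Fp_nat_neq0.
Qed.

Lemma rep_div q : rep q 0 -> p_divisible p q.
Proof.
move=> [a [d [nd hq hz]]].
have pa : (p%:Z %| a)%Z.
  move: hz; rewrite mul0r; case: (a) => n.
    rewrite intrn => /esym/eqP; rewrite -(dvdn_pcharf (pchar_Fp pr)) => pn.
    by rewrite dvdzE.
  rewrite NegzE intrN intrn => /esym/eqP; rewrite oppr_eq0.
  by rewrite -(dvdn_pcharf (pchar_Fp pr)) => pn; rewrite dvdzE.
set b := (a %/ p%:Z)%Z.
have ab : a = b * p%:Z by rewrite divzK.
exists (b%:~R / d%:R); split; last first.
  apply: (mulIf (rat_nat_neq0 nd)); rewrite hq ab intrM intrn.
  by rewrite mulrC -!mulrA mulVf ?mulr1 // rat_nat_neq0.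
rewrite /p_integral; set x := b%:~R / d%:R.
have xd : x * d%:R = b%:~R by rewrite /x -mulrA mulVf ?mulr1 // rat_nat_neq0.
have e : numq x * d%:Z = b * denq x.
  apply: (@intr_inj rat); rewrite !intrM numqE intrn -xd; ring.
apply/negP => pD.
have cop : coprimez (denq x) (numq x).
  by rewrite coprimez_sym coprimezE coprime_num_den.
have Dd : (denq x %| d%:Z)%Z.
  by rewrite -(Gauss_dvdzr _ cop) e dvdz_mull.
have := dvdz_trans pD Dd; rewrite dvdzE /= => pd.
by move: nd; rewrite pd.
Qed.

End Transfer.

Section PolyTransfer.
Variable p : nat.
Hypothesis pr : prime p.

Definition repP (P : {poly rat}) (Q : {poly 'F_p}) := forall k, @rep p P`_k Q`_k.

Lemma rep_sum I r (P : pred I) (F1 : I -> rat) (F2 : I -> 'F_p) :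
  (forall i, P i -> @rep p (F1 i) (F2 i)) ->
  @rep p (\sum_(i <- r | P i) F1 i) (\sum_(i <- r | P i) F2 i).
Proof. by apply: big_ind2; [exact: rep0 | exact: repD]. Qed.

Lemma repP0 : repP 0 0.
Proof. by move=> k; rewrite !coef0; exact: rep0. Qed.

Lemma repPD P1 Q1 P2 Q2 : repP P1 Q1 -> repP P2 Q2 -> repP (P1 + P2) (Q1 + Q2).
Proof. by move=> h1 h2 k; rewrite !coefD; apply: repD. Qed.

Lemma repPN P Q : repP P Q -> repP (- P) (- Q).
Proof. by move=> h k; rewrite !coefN; apply: repN. Qed.

Lemma repPZ c z P Q : @rep p c z -> repP P Q -> repP (c *: P) (z *: Q).
Proof. by move=> hc h k; rewrite !coefZ; apply: repM. Qed.

Lemma repP1 : repP 1 1.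
Proof. by move=> k; rewrite !coef1; apply: rep_nat. Qed.

Lemma repPX : repP 'X 'X.
Proof. by move=> k; rewrite !coefX; apply: rep_nat. Qed.

Lemma repPM P1 Q1 P2 Q2 : repP P1 Q1 -> repP P2 Q2 -> repP (P1 * P2) (Q1 * Q2).
Proof. by move=> h1 h2 k; rewrite !coefM; apply: rep_sum => i _; apply: repM. Qed.

Lemma repPXn P Q m : repP P Q -> repP (P ^+ m) (Q ^+ m).
Proof. by move=> h; elim: m => [|m IH]; [exact: repP1 | rewrite !exprS; apply: repPM]. Qed.

Lemma repP_sum I r (Pr : pred I) (F1 : I -> {poly rat}) (F2 : I -> {poly 'F_p}) :
  (forall i, Pr i -> repP (F1 i) (F2 i)) ->
  repP (\sum_(i <- r | Pr i) F1 i) (\sum_(i <- r | Pr i) F2 i).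
Proof. by apply: big_ind2; [exact: repP0 | exact: repPD]. Qed.

Lemma rep_sign k : @rep p ((-1) ^+ k) ((-1) ^+ k).
Proof.
elim: k => [|k IH]; first by rewrite !expr0; exact: (rep_nat pr 1).
by rewrite !exprS; apply: repM => //; apply: repN; exact: (rep_nat pr 1).
Qed.

Lemma prod_ndvd (s : seq 'I_p) : all (fun j : 'I_p => (0 < val j)%N) s ->
  ~~ (p %| \prod_(j <- s) val j)%N.
Proof.
elim: s => [|j s IH] /=; first by rewrite big_nil Euclid_dvd1.
move=> /andP[j0 hs]; rewrite big_cons Euclid_dvdM // negb_or IH // andbT.
by rewrite (gtnNdvd j0 (ltn_ord j)).
Qed.

End PolyTransfer.

Lemma comp_sum (R : nzRingType) I r (P : pred I) (G : I -> {poly R}) q :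
  (\sum_(i <- r | P i) G i) \Po q = \sum_(i <- r | P i) (G i \Po q).
Proof. exact: (big_morph (fun a => a \Po q) (fun a b => comp_polyD a b q) (comp_poly0 q)). Qed.

Theorem theorem1p2 (n p : nat) :
  (0 < n)%N -> prime p -> (n.+1 < p)%N ->
  forall k : nat,
    p_divisible p ((Fn n p \Po (1 - 'X) - ((-1) ^+ n.-1) *: Fn n p)`_k).
Proof.
move=> n0 pr np k; apply: (rep_div pr).
have hF := @main_F _ p pr (pchar_Fp pr) n n0 np.
suff : @repP p (Fn n p \Po (1 - 'X) - ((-1) ^+ n.-1) *: Fn n p)
              (FF 'F_p p n \Po (1 - 'X) - ((-1) ^+ n.-1) *: FF 'F_p p n).
  by move=> /(_ k); rewrite hF coef0.
have hc : forall t : n.-tuple 'I_p, sorted ltn (0%N :: [seq val j | j <- t]) ->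
   @rep p ((\prod_(j <- t) ((val j)%:R : rat))^-1) ((\prod_(j <- t) ((val j)%:R : 'F_p))^-1).
  move=> t st; rewrite -!natr_prod; apply: (rep_natinv pr); apply: (prod_ndvd pr).
  have := order_path_min ltn_trans st; rewrite all_map.
  by [].
have q1 : @repP p (1 - 'X) (1 - 'X).
  move=> i; rewrite !coefB !coef1 !coefX.
  by apply: (repD pr); [exact: (rep_nat pr) | apply: repN; exact: (rep_nat pr)].
apply: (repPD pr); last first.
  apply: repPN; apply: (repPZ pr); first exact: (rep_sign pr).
  rewrite /Fn /FF.
  by apply: (repP_sum pr) => t st; apply: (repPZ pr); [exact: hc | apply: (repPXn pr); exact: (repPX pr)].
rewrite /Fn /FF !comp_sum; apply: (repP_sum pr) => t st.
rewrite !comp_polyZ !comp_Xn_poly; apply: (repPZ pr); first exact: hc.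
exact: (repPXn pr).
Qed.
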